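(* Let $v_1,\dots,v_n\in\mathbb{R}^d$ and let $b\ge d+1$ be an integer. Let $x\in[0,1]^n$ with $\sum_{i=1}^n x(i)=b$ and $X=\sum_{i=1}^n x(i)v_iv_i^\top$. Let $S\subseteq[n]$ with $|S|=b$ be such that $Z=\sum_{i\in S}v_iv_i^\top$ is nonsingular, and let \[ Z'=Z-v_{i^*}v_{i^*}^\top+v_{j^*}v_{j^*}^\top,\quad (i^*,j^* )\in\arg\max_{i\in S,\,j\in[n]\setminus S}\det(Z-v_iv_i^\top+v_jv_j^\top). \] If $\det(Z)^{1/d}\le\frac{b-d-1}{b}\det(X)^{1/d}$, then $\det(Z')\ge\big(1+\frac{d}{4b^3}\big)\det(Z)$. *)

(* Defs.v *)
From HB Require Import structures.
From mathcomp Require Export all_boot all_order all_algebra.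
From mathcomp Require Export reals exp.

Set Implicit Arguments.
Unset Strict Implicit.
Unset Printing Implicit Defensive.

Import Order.TTheory GRing.Theory Num.Theory.
Local Open Scope ring_scope.

Definition outer (R : realType) (d : nat) (v : 'cV[R]_d) : 'M[R]_d := v *m v^T.

Definition gram_set (R : realType) (d n : nat) (v : 'I_n -> 'cV[R]_d)
  (S : {set 'I_n}) : 'M[R]_d := \sum_(i in S) outer (v i).

Definition gram_wt (R : realType) (d n : nat) (v : 'I_n -> 'cV[R]_d)
  (x : 'I_n -> R) : 'M[R]_d := \sum_(i < n) x i *: outer (v i).

Definition swap_mx (R : realType) (d n : nat) (v : 'I_n -> 'cV[R]_d)
  (Z : 'M[R]_d) (i j : 'I_n) : 'M[R]_d := Z - outer (v i) + outer (v j).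

(* Main.v *)
Require Import Defs.
From HB Require Import structures.
From mathcomp Require Import all_boot all_order all_algebra.
From mathcomp Require Import reals exp.
From mathcomp Require Import complex.
From mathcomp Require Import ring lra.
Import Order.TTheory GRing.Theory Num.Theory.
Local Open Scope ring_scope.

Set Implicit Arguments.
Unset Strict Implicit.
Unset Printing Implicit Defensive.

Section Spec.
Variable R : realType.
Local Notation C := (R[i]).
Local Notation RC := (real_complex R).

Definition cmx m n (A : 'M[R]_(m,n)) : 'M[C]_(m,n) := map_mx RC A.

Definition qf d (u : 'rV[C]_d) (A : 'M[R]_d) : C :=
  (u *m cmx A *m (map_mx (@conjc R) u)^T) 0 0.

Lemma qfD d u (A B : 'M[R]_d) : qf u (A + B) = qf u A + qf u B.
Proof. by rewrite /qf /cmx raddfD /= mulmxDr mulmxDl mxE. Qed.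

Lemma qfZ d u (a : R) (A : 'M[R]_d) : qf u (a *: A) = RC a * qf u A.
Proof.
rewrite /qf /cmx.
have -> : map_mx RC (a *: A) = RC a *: map_mx RC A.
  by apply/matrixP => i j; rewrite !mxE rmorphM.
by rewrite -scalemxAr -scalemxAl mxE.
Qed.

Lemma qf0 d u : qf u (0 : 'M[R]_d) = 0.
Proof. by rewrite /qf /cmx map_mx0 mulmx0 mul0mx mxE. Qed.

Lemma qf_sum d u (I : finType) (P : pred I) (F : I -> 'M[R]_d) :
  qf u (\sum_(i | P i) F i) = \sum_(i | P i) qf u (F i).
Proof.
elim/big_rec2: _ => [|i y1 y2 _ <-]; first by rewrite qf0.
by rewrite qfD.
Qed.

Lemma conj_cmx m n (A : 'M[R]_(m,n)) : map_mx (@conjc R) (cmx A) = cmx A.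
Proof. by apply/matrixP => i j; rewrite !mxE conjc_real. Qed.

Definition sc d (u : 'rV[C]_d) (w : 'cV[R]_d) : C := (u *m cmx w) 0 0.

Lemma qf_outer d u (w : 'cV[R]_d) : qf u (outer w) = sc u w * conjc (sc u w).
Proof.
rewrite /qf /outer /sc /cmx map_mxM -!map_trmx -!mulmxA -trmx_mul mulmxA.
have Hw : map_mx (@conjc R) (map_mx RC w) = map_mx RC w.
  by apply/matrixP=> i j; rewrite !mxE /= oppr0.
have -> : map_mx (@conjc R) u *m map_mx RC w = map_mx (@conjc R) (u *m map_mx RC w).
  by rewrite map_mxM Hw.
by rewrite mxE big_ord1 !mxE.
Qed.


Lemma mulJ_eq0 (z : C) : (z * conjc z == 0) = (z == 0).
Proof. by rewrite mulf_eq0 conjc_eq0 orbb. Qed.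

Lemma qf_gram_set d n (v : 'I_n -> 'cV[R]_d) (S : {set 'I_n}) u :
  qf u (gram_set v S) = \sum_(i in S) sc u (v i) * conjc (sc u (v i)).
Proof. by rewrite /gram_set qf_sum; apply: eq_bigr => i _; rewrite qf_outer. Qed.

Lemma qf_gram_set_ge0 d n (v : 'I_n -> 'cV[R]_d) (S : {set 'I_n}) u :
  0 <= qf u (gram_set v S).
Proof. by rewrite qf_gram_set; apply: sumr_ge0 => i _; exact: mulcJ_ge0. Qed.

Lemma qf_gram_wt_ge0 d n (v : 'I_n -> 'cV[R]_d) (x : 'I_n -> R) u :
  (forall i, 0 <= x i) -> 0 <= qf u (gram_wt v x).
Proof.
move=> x0; rewrite /gram_wt qf_sum; apply: sumr_ge0 => i _.
rewrite qfZ qf_outer; apply: mulr_ge0; last exact: mulcJ_ge0.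
by rewrite ler0c.
Qed.

Lemma mul_gram d n (v : 'I_n -> 'cV[R]_d) (S : {set 'I_n}) u :
  u *m cmx (gram_set v S) = \sum_(i in S) sc u (v i) *: (cmx (v i))^T.
Proof.
rewrite /gram_set /cmx raddf_sum /= mulmx_sumr; apply: eq_bigr => i _.
rewrite /outer map_mxM mulmxA map_trmx.
by rewrite [u *m _]mx11_scalar mul_scalar_mx.
Qed.

Lemma qf_gram_pos d n (v : 'I_n -> 'cV[R]_d) (S : {set 'I_n}) u :
  gram_set v S \in unitmx -> u != 0 -> 0 < qf u (gram_set v S).
Proof.
move=> Zu unz; rewrite lt_def qf_gram_set_ge0 andbT.
apply: contra unz; rewrite qf_gram_set => /eqP /psumr_eq0P H.
have H0 : forall i, i \in S -> sc u (v i) = 0.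
  move=> i iS; apply/eqP; rewrite -mulJ_eq0; apply/eqP; apply: H => //.
  by move=> j _; exact: mulcJ_ge0.
have uZ0 : u *m cmx (gram_set v S) = 0.
  by rewrite mul_gram big1 // => i iS; rewrite H0 // scale0r.
have -> : u = u *m cmx (gram_set v S) *m cmx (invmx (gram_set v S)).
  by rewrite -mulmxA /cmx -map_mxM mulmxV // map_mx1 mulmx1.
by rewrite uZ0 mul0mx.
Qed.

Lemma qf_one_pos d (u : 'rV[C]_d) : u != 0 -> 0 < qf u 1%:M.
Proof.
move=> unz.
have E : qf u 1%:M = \sum_k u 0 k * conjc (u 0 k).
  rewrite /qf /cmx map_mx1 mulmx1 mxE; apply: eq_bigr => k _; by rewrite !mxE.
have ge : forall k : 'I_d, true -> 0 <= u 0 k * conjc (u 0 k) by move=> k _; exact: mulcJ_ge0.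
rewrite E lt_def sumr_ge0 // andbT.
apply: contra unz => /eqP /psumr_eq0P H; apply/eqP/rowP => k.
by rewrite mxE; apply/eqP; rewrite -mulJ_eq0; apply/eqP; apply: H.
Qed.

Lemma eig_nonneg d (A B : 'M[R]_d) (a : C) : B \in unitmx ->
  (forall u, 0 <= qf u A) -> (forall u, u != 0 -> 0 < qf u B) ->
  eigenvalue (cmx (invmx B *m A)) a -> 0 <= a.
Proof.
move=> Bu HA HB /eigenvalueP [v Hv vnz].
set u := v *m cmx (invmx B).
have vE : v = u *m cmx B.
  by rewrite /u -mulmxA /cmx -map_mxM mulVmx // map_mx1 mulmx1.
have unz : u != 0 by apply: contraNneq vnz => u0; rewrite vE u0 mul0mx.
have HuA : u *m cmx A = a *: (u *m cmx B).
  by rewrite -vE -Hv /u -mulmxA /cmx -map_mxM.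
have Hq : qf u A = a * qf u B by rewrite /qf HuA -scalemxAl mxE.
have := HA u; rewrite Hq => H.
by rewrite -(pmulr_lge0 _ (HB u unz)).
Qed.


Lemma spec_agm d (M : 'M[C]_d) : (0 < d)%N -> (forall a, eigenvalue M a -> 0 <= a) ->
  [/\ 0 <= \det M, \det M <= (\tr M / d%:R) ^+ d & 0 <= \tr M].
Proof.
move=> d0 Heig.
have [r Hr] := closed_field_poly_normal (char_poly M).
rewrite (monicP (char_poly_monic M)) scale1r in Hr.
have sz : size r = d.
  have := size_char_poly M; rewrite Hr size_prod_XsubC; by case.
have rge0 : forall z, z \in r -> 0 <= z.
  move=> z zr; apply: Heig; rewrite eigenvalue_root_char Hr.
  by rewrite root_prod_XsubC.
have detE : \det M = \prod_(z <- r) z.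
  have := char_poly_det M; rewrite Hr coef0_prod_XsubC sz => /eqP.
  by rewrite (inj_eq (can_inj (signrMK _))) => /eqP ->.
have trE : \tr M = \sum_(z <- r) z.
  have := char_poly_trace M d0; rewrite Hr -{1}sz coefPn_prod_XsubC; last by rewrite sz -lt0n.
  by move/oppr_inj ->.
have trge0 : 0 <= \tr M by rewrite trE big_seq sumr_ge0.
split => //; first by rewrite detE big_seq prodr_ge0.
rewrite detE trE (big_nth 0) [X in _ <= (X / _) ^+ _](big_nth 0) !big_mkord.
have := @leif_AGM C 'I_(size r) predT (fun i => r`_i).
rewrite card_ord sz => H.
have [H1 _] := H (fun i _ => rge0 _ (mem_nth 0 (eq_ind_r (fun k => (i < k)%N) (ltn_ord i) sz))).
exact: H1.
Qed.


Lemma real_agm d (A B : 'M[R]_d) : (0 < d)%N -> B \in unitmx ->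
  (forall u, 0 <= qf u A) -> (forall u, u != 0 -> 0 < qf u B) ->
  let M := invmx B *m A in
  [/\ 0 <= \det M, \det M <= (\tr M / d%:R) ^+ d & 0 <= \tr M].
Proof.
move=> d0 Bu HA HB M.
have [h1 h2 h3] := spec_agm d0 (fun a => eig_nonneg Bu HA HB (a:=a)).
move: h1 h2 h3; rewrite /cmx det_map_mx trace_map_mx -/M.
rewrite !ler0c => -> h2 ->; split => //.
move: h2; rewrite -(rmorph_nat (real_complex R)) -fmorph_div -rmorphXn.
by rewrite lecR.
Qed.

Lemma gram_facts d n (v : 'I_n -> 'cV[R]_d) (S : {set 'I_n}) (x : 'I_n -> R) :
  (0 < d)%N -> gram_set v S \in unitmx -> (forall i, 0 <= x i) ->
  let M := invmx (gram_set v S) *m gram_wt v x in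
  [/\ 0 < \det (gram_set v S), 0 <= \det M, \det M <= (\tr M / d%:R) ^+ d & 0 <= \tr M].
Proof.
move=> d0 Zu x0 M.
have [h1 h2 h3] := real_agm d0 Zu (fun u => qf_gram_wt_ge0 v u x0)
   (fun u unz => qf_gram_pos Zu unz).
split => //.
have [g1 _ _] := real_agm (B := 1%:M) d0 (unitmx1 _ _) (fun u => qf_gram_set_ge0 v S u)
   (fun u unz => qf_one_pos unz).
move: g1; rewrite invmx1 mul1mx le_eqVlt => /orP [/eqP h|//].
by move: Zu; rewrite unitmxE -h unitr0.
Qed.

End Spec.

Section Det.
Variable R : realType.

Lemma det_mx22 (A : 'M[R]_2) : \det A = A 0 0 * A 1 1 - A 0 1 * A 1 0.
Proof.
rewrite (expand_det_row _ 0) !big_ord_recl big_ord0 addr0 /cofactor !det_mx11 !mxE /=.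
have l1 : lift 0 (0 : 'I_1) = 1 :> 'I_2 by apply/val_inj.
have l2 : lift (1 : 'I_2) (0 : 'I_1) = 0 :> 'I_2 by apply/val_inj.
rewrite l1 l2 /= expr0 expr1 mul1r mulN1r.
by rewrite mulrN.
Qed.

Lemma sylvester m n (P : 'M[R]_(m, n)) (Q : 'M[R]_(n, m)) :
  \det (1%:M + P *m Q) = \det (1%:M + Q *m P).
Proof.
have E1 : block_mx 1%:M (- P) Q 1%:M = block_mx 1%:M 0 Q 1%:M *m block_mx 1%:M (- P) 0 (1%:M + Q *m P).
  rewrite mulmx_block ?mul1mx ?mulmx1 ?mul0mx ?mulmx0 ?addr0 ?add0r mulmxN.
  by rewrite addrCA addNr addr0.
have E2 : block_mx 1%:M (- P) Q 1%:M = block_mx (1%:M + P *m Q) (- P) 0 1%:M *m block_mx 1%:M 0 Q 1%:M.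
  rewrite mulmx_block ?mul1mx ?mulmx1 ?mul0mx ?mulmx0 ?addr0 ?add0r mulNmx.
  by rewrite addrK.
have := congr1 determinant E1; rewrite E2 !det_mulmx !det_lblock !det_ublock !det1.
by rewrite !mul1r !mulr1.
Qed.


Definition bil d (G : 'M[R]_d) (a c : 'cV[R]_d) := (a^T *m G *m c) 0 0.

Lemma det_swap d (Z : 'M[R]_d) (u w : 'cV[R]_d) : Z \in unitmx ->
  let G := invmx Z in
  \det (Z - outer u + outer w) =
  \det Z * ((1 - bil G u u) * (1 + bil G w w) + bil G u w * bil G w u).
Proof.
move=> Zu G.
pose P := \matrix_(k < d, i < 2) (if i == 0 then - (G *m u) k 0 else (G *m w) k 0).
pose Q := \matrix_(i < 2, k < d) (if i == 0 then u k 0 else w k 0).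
have PQ : P *m Q = - ((G *m u) *m u^T) + (G *m w) *m w^T.
  apply/matrixP => a c; rewrite !mxE big_ord_recl big_ord1 !mxE !big_ord1 !mxE /=.
  by rewrite mulNr.
have HZ : Z - outer u + outer w = Z *m (1%:M + P *m Q).
  rewrite PQ mulmxDr mulmx1 mulmxDr mulmxN !mulmxA /G mulmxV // !mul1mx /outer.
  by rewrite addrA.
rewrite HZ det_mulmx sylvester det_mx22; congr (_ * _).
have ebil : forall a c, bil G a c = \sum_k a k 0 * (G *m c) k 0.
  by move=> a c; rewrite /bil -mulmxA mxE; apply: eq_bigr => k _; rewrite !mxE.
have e00 : \sum_j Q 0 j * P j 0 = - bil G u u.
  by rewrite ebil -sumrN; apply: eq_bigr => k _; rewrite !mxE /= mulrN.
have e11 : \sum_j Q 1 j * P j 1 = bil G w w.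
  by rewrite ebil; apply: eq_bigr => k _; rewrite !mxE /=.
have e01 : \sum_j Q 0 j * P j 1 = bil G u w.
  by rewrite ebil; apply: eq_bigr => k _; rewrite !mxE /=.
have e10 : \sum_j Q 1 j * P j 0 = - bil G w u.
  by rewrite ebil -sumrN; apply: eq_bigr => k _; rewrite !mxE /= mulrN.
rewrite !mxE e00 e11 e01 e10 /=.
ring.
Qed.

Lemma mx11_mul (A B : 'M[R]_1) : (A *m B) 0 0 = A 0 0 * B 0 0.
Proof. by rewrite mxE big_ord1. Qed.

Lemma outer_sym d (a : 'cV[R]_d) : (outer a)^T = outer a.
Proof. by rewrite /outer trmx_mul trmxK. Qed.

Lemma gram_sym d n (v : 'I_n -> 'cV[R]_d) S : (gram_set v S)^T = gram_set v S.
Proof.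
rewrite /gram_set raddf_sum; apply: eq_bigr => i _; exact: outer_sym.
Qed.

Lemma bil_sym d (G : 'M[R]_d) a c : G^T = G -> bil G a c = bil G c a.
Proof.
move=> GT; rewrite /bil -[in LHS](trmxK (a^T *m G *m c)) mxE.
by rewrite !trmx_mul trmxK GT mulmxA.
Qed.

Lemma bil_tr d (G : 'M[R]_d) a : bil G a a = \tr (G *m outer a).
Proof.
rewrite /bil /outer.
transitivity (\tr (a^T *m G *m a)); first by rewrite /mxtrace big_ord1.
by rewrite mxtrace_mulC [RHS]mxtrace_mulC mulmxA.
Qed.

Lemma bil_sq d (G : 'M[R]_d) a c : bil G c a * bil G a c = (c^T *m G *m outer a *m G *m c) 0 0.
Proof.
rewrite /bil -mx11_mul /outer.
by rewrite !mulmxA.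
Qed.

Section Gram.
Variables (d n : nat) (v : 'I_n -> 'cV[R]_d) (S : {set 'I_n}).
Hypothesis Zu : gram_set v S \in unitmx.
Local Notation Z := (gram_set v S).
Local Notation G := (invmx (gram_set v S)).

Lemma GT : G^T = G.
Proof. by rewrite trmx_inv gram_sym. Qed.

Lemma sum_tau : \sum_(i in S) bil G (v i) (v i) = d%:R.
Proof.
rewrite (eq_bigr (fun i => \tr (G *m outer (v i)))); last by move=> i _; rewrite bil_tr.
rewrite -raddf_sum /= -mulmx_sumr.
have -> : \sum_(i in S) outer (v i) = Z by [].
by rewrite mulVmx // mxtrace1.
Qed.

Lemma sum_wtau (x : 'I_n -> R) : \sum_i x i * bil G (v i) (v i) = \tr (G *m gram_wt v x).
Proof.
rewrite /gram_wt mulmx_sumr raddf_sum /=; apply: eq_bigr => i _.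
by rewrite bil_tr -scalemxAr mxtraceZ.
Qed.

Lemma sum_sigma2 j : \sum_(i in S) bil G (v i) (v j) ^+ 2 = bil G (v j) (v j).
Proof.
rewrite (eq_bigr (fun i => ((v j)^T *m G *m outer (v i) *m G *m v j) 0 0)); last first.
  by move=> i _; rewrite expr2 {1}bil_sym ?GT // bil_sq.
rewrite -summxE -!mulmx_suml -mulmx_sumr.
have -> : \sum_(i in S) outer (v i) = Z by [].
by rewrite -[_ *m Z *m G]mulmxA mulmxV // mulmx1.
Qed.

End Gram.
End Det.

Section Ineq.
Variable R : realType.

Lemma final_ineq (b d m A T r : R) : 1 <= d -> d + 2 <= b -> 0 <= m -> m <= b ->
  0 <= A -> A <= m ->
  d * b <= (b - d - 1) * T ->
  (b - d) * m + (b - d + 1) * (T - d + A) <= b * m * r ->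
  (m - A) * (m + (T - d + A)) <= m ^+ 2 * r ->
  1 + d / (4 * b ^+ 3) <= r.
Proof.
move=> d1 db m00 mb A0 Am HT U1 U0.
have b0 : 0 < b by lra.
have m0 : 0 < m.
  rewrite lt_def m00 andbT; apply/negP => /eqP me.
  move: Am A0 U1; rewrite me => Am A0 U1.
  have Ae : A = 0 by lra.
  rewrite Ae mulr0 add0r mulr0 mul0r addr0 in U1.
  have : T - d <= 0.
    have K0 : 0 < b - d + 1 by lra.
    by rewrite -(pmulr_rle0 _ K0).
  move=> h; nra.
set eps := d / (4 * b ^+ 3).
have epsE : eps * (4 * b ^+ 3) = d.
  rewrite /eps mulfVK //; apply: lt0r_neq0; apply: mulr_gt0 => //; exact: exprn_gt0.
have eps0 : 0 <= eps.
  rewrite /eps; apply: divr_ge0; first lra; apply: mulr_ge0; first lra; apply: exprn_ge0; lra.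
have F2 : 4 * eps * b ^+ 2 <= 1.
  have : 4 * eps * b ^+ 2 * b = d by rewrite -epsE; ring.
  move=> H; nra.
set K := b - d + 1.
set k1 := b - d - 1.
set E := d + eps * b.
set B := T - d + A.
set C0 := T - d.
have HC0 : d * (d + 1) <= k1 * C0 by rewrite /k1 /C0; nra.
have bm0 : 0 < b * m by nra.
have [c1|c2] := lerP (E * m) (K * B).
  have : b * m * (1 + eps) <= b * m * r.
    have -> : b * m * (1 + eps) = (b - d) * m + E * m by rewrite /E; ring.
    have : (b - d) * m + E * m <= (b - d) * m + K * B by lra.
    move=> H; exact: le_trans H U1.
  by rewrite ler_pM2l.
have Ud : m ^+ 2 + C0 * m + C0 * B - B ^+ 2 <= m ^+ 2 * r.
  by rewrite /C0 /B in U0 *; nra.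
have K0 : 0 < K by rewrite /K; lra.
set Q := E * m / K.
have QE : Q * K = E * m by rewrite /Q mulfVK // lt0r_neq0.
have BQ : B < Q.
  by rewrite -(ltr_pM2r K0) QE mulrC.
have Q0 : 0 < Q by rewrite -(ltr_pM2r K0) QE mul0r; apply: mulr_gt0 => //; rewrite /E; nra.
have CB : C0 <= B by rewrite /B /C0; lra.
have step1 : C0 * Q - Q ^+ 2 <= C0 * B - B ^+ 2.
  have : 0 <= (Q - B) * (Q + B - C0) by apply: mulr_ge0; lra.
  by move=> H; nra.
have EK : E ^+ 2 + eps * K ^+ 2 <= d ^+ 2 + d.
  have KB : K <= b by rewrite /K; lra.
  have : eps * K ^+ 2 <= eps * b ^+ 2 by apply: ler_wpM2l => //; rewrite !expr2; nra.
  move=> H.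
  have eb : eps * b <= 1 / 4.
    have : eps * b <= eps * b ^+ 2 by rewrite expr2 mulrA ler_peMr //; [apply: mulr_ge0 | ]; lra.
    lra.
  have eb0 : 0 <= eps * b by apply: mulr_ge0; lra.
  have h1 : d * (eps * b) <= d / 4 by nra.
  have h2 : (eps * b) ^+ 2 <= 1 / 16 by rewrite expr2; nra.
  have -> : E ^+ 2 = d ^+ 2 + 2 * (d * (eps * b)) + (eps * b) ^+ 2 by rewrite /E; ring.
  lra.
have C0pos : 0 <= C0.
  have k10 : 0 < k1 by rewrite /k1; lra.
  nra.
have key : b * (E ^+ 2 + eps * K ^+ 2) <= C0 * K * (K + E).
  have k10 : 0 < k1 by rewrite /k1; lra.
  have h1 : k1 * (b * (E ^+ 2 + eps * K ^+ 2)) <= k1 * (C0 * K * (K + E)).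
    have e1 : K + E >= b + 1 by rewrite /K /E; nra.
    have e2 : k1 <= K by rewrite /k1 /K; lra.
    have e3 : k1 * (b * (E ^+ 2 + eps * K ^+ 2)) <= K * (b + 1) * (d ^+ 2 + d).
      have s1 : b * (E ^+ 2 + eps * K ^+ 2) <= b * (d ^+ 2 + d) by rewrite ler_pM2l.
      have s2 : k1 * (b * (E ^+ 2 + eps * K ^+ 2)) <= k1 * (b * (d ^+ 2 + d)) by rewrite ler_pM2l.
      have s3 : 0 <= b * (d ^+ 2 + d) by apply: mulr_ge0; rewrite ?expr2; nra.
      have s4 : k1 * (b * (d ^+ 2 + d)) <= K * (b * (d ^+ 2 + d)) by apply: ler_wpM2r.
      have s5 : K * (b * (d ^+ 2 + d)) <= K * ((b + 1) * (d ^+ 2 + d)).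
        apply: ler_wpM2l; first lra.
        apply: ler_wpM2r; rewrite ?expr2; nra.
      rewrite -mulrA; lra.
    have e4 : K * (b + 1) * (d * (d + 1)) <= K * (K + E) * (k1 * C0).
      rewrite -!mulrA; apply: ler_wpM2l; first lra.
      have t0 : 0 <= d * (d + 1) by apply: mulr_ge0; lra.
      have t1 : (b + 1) * (d * (d + 1)) <= (K + E) * (d * (d + 1)) by apply: ler_wpM2r.
      have t2 : (K + E) * (d * (d + 1)) <= (K + E) * (k1 * C0) by apply: ler_wpM2l => //; lra.
      lra.
    nra.
  by rewrite ler_pM2l in h1.
have main : eps * m ^+ 2 <= C0 * m + C0 * Q - Q ^+ 2.
  have : (eps * m ^+ 2) * K ^+ 2 <= (C0 * m + C0 * Q - Q ^+ 2) * K ^+ 2.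
    have -> : (C0 * m + C0 * Q - Q ^+ 2) * K ^+ 2 = m * (C0 * K * (K + E)) - m ^+ 2 * E ^+ 2.
      have : (C0 * m + C0 * Q - Q ^+ 2) * K ^+ 2 = C0 * m * K ^+ 2 + C0 * (Q * K) * K - (Q * K) ^+ 2 by ring.
      by rewrite QE => ->; ring.
    have W0 : 0 <= E ^+ 2 + eps * K ^+ 2 by apply: addr_ge0; [exact: sqr_ge0 | apply: mulr_ge0 => //; exact: sqr_ge0].
    have w1 : m * (E ^+ 2 + eps * K ^+ 2) <= b * (E ^+ 2 + eps * K ^+ 2) by apply: ler_wpM2r.
    have w2 : m * (m * (E ^+ 2 + eps * K ^+ 2)) <= m * (C0 * K * (K + E)).
      by apply: ler_wpM2l; [lra | exact: le_trans w1 key].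
    have -> : eps * m ^+ 2 * K ^+ 2 = m * (m * (E ^+ 2 + eps * K ^+ 2)) - m ^+ 2 * E ^+ 2 by ring.
    lra.
  by rewrite ler_pM2r // exprn_gt0.
have : m ^+ 2 * (1 + eps) <= m ^+ 2 * r by nra.
by rewrite ler_pM2l // exprn_gt0.
Qed.

End Ineq.

Theorem proposition3p4 (R : realType) (d n b : nat) (v : 'I_n -> 'cV[R]_d)
  (x : 'I_n -> R) (S : {set 'I_n}) (istar jstar : 'I_n) :
  (d.+1 <= b)%N ->
  (forall i, 0 <= x i <= 1) ->
  \sum_(i < n) x i = b%:R ->
  #|S| = b ->
  gram_set v S \in unitmx ->
  istar \in S -> jstar \notin S ->
  (forall i j, i \in S -> j \notin S ->
     \det (swap_mx v (gram_set v S) i j)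
       <= \det (swap_mx v (gram_set v S) istar jstar)) ->
  powR (\det (gram_set v S)) (d%:R^-1)
    <= (b%:R - d%:R - 1) / b%:R * powR (\det (gram_wt v x)) (d%:R^-1) ->
  \det (swap_mx v (gram_set v S) istar jstar)
    >= (1 + d%:R / (4 * b%:R ^+ 3)) * \det (gram_set v S).
Proof.
move=> db hx hsum hS Zu iS jS hmax hpow.
case: d v db hpow hmax Zu => [|d] v db hpow hmax Zu.
  by rewrite !det_mx00 mul0r addr0 mul1r.
set Z := gram_set v S in hpow hmax Zu *.
set X := gram_wt v x in hpow *.
set G := invmx Z.
have x0 : forall i, 0 <= x i by move=> i; case/andP: (hx i).
have x1 : forall i, x i <= 1 by move=> i; case/andP: (hx i).
have [detZ0 P0 PB t0] := gram_facts (x:=x) (ltn0Sn d) Zu x0.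
rewrite -/Z -/X -/G in P0 PB t0.
set P := \det (G *m X) in P0 PB.
set t := \tr (G *m X) in PB t0.
set dR := (d.+1)%:R : R.
have dR0 : 0 < dR by rewrite /dR ltr0n.
have detX : \det X = \det Z * P.
  by rewrite /P det_mulmx /G det_inv mulrA divff ?mul1r // gt_eqF.
have pP : powR P dR^-1 <= t / dR.
  have t0' : 0 <= t / dR by apply: divr_ge0 => //; exact: ltW.
  have dRi : 0 <= dR^-1 by rewrite invr_ge0 ltW.
  have H := @ge0_ler_powR R dR^-1 dRi P ((t / dR) ^+ d.+1).
  have tE : powR ((t / dR) ^+ d.+1) dR^-1 = t / dR.
    by rewrite -powR_mulrn // -powRrM mulfV ?gt_eqF // powRr1.
  rewrite -tE; apply: H; rewrite ?nnegrE //; exact: exprn_ge0.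
set bR := b%:R : R.
have bR0 : 0 < bR by rewrite /bR ltr0n; apply: leq_trans db.
have c0 : 0 <= bR - dR - 1.
  rewrite /bR /dR -(natrB _ (ltnW db)) -(natrB _ (_ : 1 <= b - d.+1)%N) ?subn_gt0 //.
have tb : dR * bR <= (bR - dR - 1) * t.
  have pZ0 : 0 < powR (\det Z) dR^-1 by apply: powR_gt0.
  rewrite detX powRM ?(ltW detZ0) // mulrCA -[X in X <= _]mulr1 in hpow.
  rewrite ler_pM2l // in hpow.
  have h2 : (bR - dR - 1) / bR * powR P dR^-1 <= (bR - dR - 1) / bR * (t / dR).
    by apply: ler_wpM2l => //; apply: divr_ge0 => //; exact: ltW.
  have h3 := le_trans hpow h2.
  have h4 : (bR - dR - 1) / bR * (t / dR) * (bR * dR) = (bR - dR - 1) * t.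
    by field; rewrite (gt_eqF bR0) andbT addrC natr1 pnatr_eq0.
  have := ler_wpM2r (ltW (mulr_gt0 bR0 dR0)) h3.
  by rewrite h4 mul1r mulrC.
have db2 : dR + 2 <= bR.
  have : (d.+3 <= b)%N.
    rewrite ltn_neqAle db andbT; apply/eqP => be.
    move: tb; rewrite /bR -be /dR.
    have -> : (d.+2)%:R - (d.+1)%:R - 1 = 0 :> R by rewrite -natrB // subSn // subnn subrr.
    by rewrite mul0r; apply/negP; rewrite -ltNge; apply: mulr_gt0; rewrite ltr0n.
  by rewrite /bR /dR -natrD ler_nat addn2.
have GTs : G^T = G := GT v S.
pose tau j := bil G (v j) (v j).
pose r i j := (1 - tau i) * (1 + tau j) + bil G (v i) (v j) * bil G (v j) (v i).
have sgs : forall i j, bil G (v i) (v j) * bil G (v j) (v i) = bil G (v i) (v j) ^+ 2.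
  by move=> i j; rewrite expr2 [bil G (v j) _]bil_sym.
have stau : \sum_(i in S) tau i = dR := sum_tau Zu.
have ssg : forall j, \sum_(i in S) bil G (v i) (v j) ^+ 2 = tau j := sum_sigma2 Zu.
have swt : \sum_i x i * tau i = t := sum_wtau v S x.
have tau0 : forall j, 0 <= tau j.
  by move=> j; rewrite -ssg; apply: sumr_ge0 => i _; exact: sqr_ge0.
have tau1 : forall i, i \in S -> tau i <= 1.
  move=> i iS'; have h : tau i ^+ 2 <= tau i.
    rewrite -{2}ssg (bigD1 i) //= lerDl; apply: sumr_ge0 => k _; exact: sqr_ge0.
  have := tau0 i; nra.
set rs := r istar jstar.
have hr : forall i j, i \in S -> j \notin S -> r i j <= rs.
  move=> i j iS' jS'; have := hmax i j iS' jS'.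
  by rewrite /swap_mx !det_swap // -/G ler_pM2l.
set m := \sum_(j | j \notin S) x j.
have hsplit : \sum_(i in S) x i + m = bR.
  by rewrite /bR -hsum [in RHS](bigID (fun i => i \in S)) /=.
have hm : \sum_(i in S) (1 - x i) = m.
  rewrite sumrB sumr_const hS; rewrite /bR in hsplit; lra.
set A := \sum_(i in S) (1 - x i) * tau i.
have hA1 : \sum_(i in S) x i * tau i = dR - A.
  by rewrite /A -stau -sumrB; apply: eq_bigr => i _; ring.
set B := \sum_(j | j \notin S) x j * tau j.
have hB : B = t - dR + A.
  have := swt; rewrite (bigID (fun i => i \in S)) /= hA1 -/B => <-; ring.
have A0 : 0 <= A.
  by apply: sumr_ge0 => i _; apply: mulr_ge0 => //; rewrite subr_ge0.
have Am : A <= m.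
  rewrite -hm; apply: ler_sum => i iS'; rewrite -[X in _ <= X]mulr1.
  by apply: ler_wpM2l; [rewrite subr_ge0 | exact: tau1].
have m0 : 0 <= m by apply: sumr_ge0.
have mb : m <= bR.
  have : 0 <= \sum_(i in S) x i by apply: sumr_ge0.
  lra.
have inner : forall j, \sum_(i in S) r i j = (bR - dR) * (1 + tau j) + tau j.
  move=> j; rewrite big_split /= -big_distrl /= sumrB sumr_const hS stau.
  by rewrite -(ssg j); congr (_ + _); apply: eq_bigr => i _; rewrite sgs.
have U1 : (bR - dR) * m + (bR - dR + 1) * (t - dR + A) <= bR * m * rs.
  rewrite -hB.
  have -> : (bR - dR) * m + (bR - dR + 1) * B = \sum_(j | j \notin S) x j * \sum_(i in S) r i j.
    rewrite /B /m !mulr_sumr -big_split; apply: eq_bigr => j _; rewrite inner /=; ring.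
  have -> : bR * m * rs = \sum_(j | j \notin S) x j * (\sum_(i in S) rs).
    by rewrite sumr_const hS -mulr_suml -/m -mulr_natr /bR; ring.
  apply: ler_sum => j jS'; apply: ler_wpM2l => //.
  by apply: ler_sum => i iS'; exact: hr.
have U0 : (m - A) * (m + (t - dR + A)) <= m ^+ 2 * rs.
  rewrite -hB.
  have -> : m - A = \sum_(i in S) (1 - x i) * (1 - tau i).
    by rewrite -hm /A -sumrB; apply: eq_bigr => i _; ring.
  have -> : m + B = \sum_(j | j \notin S) x j * (1 + tau j).
    by rewrite /m /B -big_split; apply: eq_bigr => j _ /=; ring.
  rewrite mulr_suml.
  have -> : m ^+ 2 * rs = \sum_(i in S) (1 - x i) * \sum_(j | j \notin S) x j * rs.
    by rewrite -mulr_suml hm -mulr_suml -/m; ring.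
  apply: ler_sum => i iS'; rewrite mulr_sumr mulr_sumr.
  apply: ler_sum => j jS'.
  have hij := hr i j iS' jS'.
  have h2 : (1 - tau i) * (1 + tau j) <= r i j.
    by rewrite /r sgs lerDl; exact: sqr_ge0.
  have xi : 0 <= 1 - x i by rewrite subr_ge0.
  have h3 : (1 - tau i) * (1 + tau j) <= rs := le_trans h2 hij.
  have : (1 - x i) * (x j * ((1 - tau i) * (1 + tau j))) <= (1 - x i) * (x j * rs).
    by apply: ler_wpM2l => //; apply: ler_wpM2l.
  by move=> H; apply: le_trans H; rewrite le_eqVlt; apply/orP; left; apply/eqP; ring.
have d1 : 1 <= dR by rewrite /dR ler1n.
have fin := @final_ineq _ _ _ _ _ _ _ d1 db2 m0 mb A0 Am tb U1 U0.
have -> : \det (swap_mx v Z istar jstar) = \det Z * rs by rewrite /swap_mx det_swap.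
by rewrite mulrC; apply: ler_wpM2l => //; exact: ltW.
Qed.
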